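(* Let $J$ be a bounded half-line Jacobi matrix with $0<\inf_na_n\le\sup_na_n<\infty$, and let $\mathcal R$ be the set of its right limits. Let $\Xi$ be the set of $x_0\in\mathbb{R}$ such that for every $J^{(r)}\in\mathcal R$ and every nonzero solution $(u_n)_{n\in\mathbb{Z}}$ of $a^{(r)}_nu_{n+1}+b^{(r)}_nu_n+a^{(r)}_{n-1}u_{n-1}=x_0u_n$ one has $\sum_{n=-\infty}^0|u_n|^2=\infty$. Then: (i) for every compact $\tilde K\subset\Xi$, $\sup_{x_0\in\tilde K}p_n(x_0)^2/K_n(x_0,x_0)\to0$ as $n\to\infty$ (the Nevai condition holds uniformly on $\tilde K$); (ii) if $\Xi\supseteq\sigma_{\mathrm{ess}}(J)$, then $\sup_{x_0\in\sigma(J)}p_n(x_0)^2/K_n(x_0,x_0)\to0$ (the Nevai condition holds uniformly on $\sigma(J)$).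
   Context: A half-line Jacobi matrix $J$ with parameters $\{a_n,b_n\}_{n\ge1}$ ($a_n>0$) acts on $\ell^2(\{1,2,\dots\})$ by $J_{nn}=b_n$, $J_{n,n+1}=J_{n+1,n}=a_n$; $\rho$ is its spectral measure for $\delta_1$, $p_n$ ($n\ge0$) its orthonormal polynomials ($p_{-1}=0$, $p_0=1$, $xp_n=a_{n+1}p_{n+1}+b_{n+1}p_n+a_np_{n-1}$), and $K_n(x,y)=\sum_{j=0}^np_j(x)p_j(y)$. A two-sided sequence $\{a^{(r)}_n,b^{(r)}_n\}_{n\in\mathbb{Z}}$ is a right limit of $J$ if there are $m_j\to\infty$ with $a_{m_j+n}\to a^{(r)}_n$ and $b_{m_j+n}\to b^{(r)}_n$ for every $n\in\mathbb{Z}$; $J^{(r)}$ is the corresponding two-sided Jacobi matrix. The Nevai condition at $x_0$ means $K_n(x,x_0)^2\,d\rho(x)/K_n(x_0,x_0)\to\delta_{x_0}$ weakly. *)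

(* Defs.v *)
From Stdlib Require Import Reals ZArith Rtopology.
Open Scope R_scope.

(* Convention: a b : nat -> R hold the Jacobi parameters a_n, b_n for n >= 1;
   the values a 0, b 0 are irrelevant (never used). *)

(* Orthonormal polynomials: pp n x = (p_n(x), p_{n-1}(x)), p_{-1} = 0, p_0 = 1,
   p_{n+1} = ((x - b_{n+1}) p_n - a_n p_{n-1}) / a_{n+1}. *)
Fixpoint pp (a b : nat -> R) (n : nat) (x : R) : R * R :=
  match n with
  | O => (1, 0)
  | S m => let '(pm, pm1) := pp a b m x in
           (((x - b (S m)) * pm - a m * pm1) / a (S m), pm)
  end.

Definition opoly (a b : nat -> R) (n : nat) (x : R) : R := fst (pp a b n x).

Definition CD_kernel (a b : nat -> R) (n : nat) (x y : R) : R :=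
  sum_f_R0 (fun j => opoly a b j x * opoly a b j y) n.

(* Extension of a 1-based sequence to Z (junk value 0 for indices <= 0;
   irrelevant for right limits since m_j -> infinity). *)
Definition extZ (a : nat -> R) (k : Z) : R :=
  if (0 <? k)%Z then a (Z.to_nat k) else 0.

Definition right_limit (a b : nat -> R) (ar br : Z -> R) : Prop :=
  exists m : nat -> nat,
    (forall M : nat, exists j0 : nat, forall j, (j0 <= j)%nat -> (M <= m j)%nat) /\
    (forall n : Z, Un_cv (fun j => extZ a (Z.of_nat (m j) + n)%Z) (ar n)) /\
    (forall n : Z, Un_cv (fun j => extZ b (Z.of_nat (m j) + n)%Z) (br n)).

Definition Xi (a b : nat -> R) (x0 : R) : Prop :=
  forall ar br : Z -> R, right_limit a b ar br ->
  forall u : Z -> R,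
    (forall n : Z, ar n * u (n + 1)%Z + br n * u n + ar (n - 1)%Z * u (n - 1)%Z = x0 * u n) ->
    (exists n : Z, u n <> 0) ->
    forall M : R, exists N : nat,
      M < sum_f_R0 (fun k => (u (- Z.of_nat k)%Z) ^ 2) N.

(* ell^2({1,2,...}): vectors are 0-based, u k is the component at site k+1. *)
Definition l2sum (u : nat -> R) (s : R) : Prop := infinite_sum (fun k => (u k) ^ 2) s.
Definition l2 (u : nat -> R) : Prop := exists s, l2sum u s.

(* Action of J on 0-based vectors: (Ju)_k = a_k u_{k-1} + b_{k+1} u_k + a_{k+1} u_{k+1}
   (with the first term absent for k = 0). *)
Definition Jop (a b : nat -> R) (u : nat -> R) (k : nat) : R :=
  b (S k) * u k + a (S k) * u (S k) +
  match k with O => 0 | S k' => a k * u k' end.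

(* x is in the resolvent set: J - x is a bijection of ell^2 with bounded inverse. *)
Definition resolvent_set (a b : nat -> R) (x : R) : Prop :=
  exists C : R, forall v : nat -> R, l2 v ->
    exists u : nat -> R, l2 u /\
      (forall k, Jop a b u k - x * u k = v k) /\
      (forall su sv, l2sum u su -> l2sum v sv -> su <= C * sv) /\
      (forall w : nat -> R, l2 w -> (forall k, Jop a b w k - x * w k = v k) ->
         forall k, w k = u k).

Definition spectrum (a b : nat -> R) (x : R) : Prop := ~ resolvent_set a b x.

Definition eigenvalue (a b : nat -> R) (x : R) : Prop :=
  exists u : nat -> R, l2 u /\ (exists k, u k <> 0) /\ (forall k, Jop a b u k = x * u k).

(* Discrete spectrum: isolated points of the spectrum that are eigenvalues
   (eigenvalues of a Jacobi matrix are automatically simple, hence of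
   finite multiplicity). *)
Definition disc_spectrum (a b : nat -> R) (x : R) : Prop :=
  spectrum a b x /\ eigenvalue a b x /\
  exists eps, 0 < eps /\ forall y, spectrum a b y -> Rabs (y - x) < eps -> y = x.

Definition ess_spectrum (a b : nat -> R) (x : R) : Prop :=
  spectrum a b x /\ ~ disc_spectrum a b x.

Definition uniform_nevai (a b : nat -> R) (S : R -> Prop) : Prop :=
  forall eps, 0 < eps -> exists N : nat, forall n, (N <= n)%nat ->
    forall x, S x -> (opoly a b n x) ^ 2 / CD_kernel a b n x x <= eps.

(* Main.v *)
Require Import Defs.
From Stdlib Require Import Reals ZArith Rtopology Lra Lia Psatz Classical ClassicalEpsilon.
Open Scope R_scope.


Lemma cv_le (u : nat -> R) l Sb : Un_cv u l -> (forall n, u n <= Sb) -> l <= Sb.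
Proof.
  intros Hu Hs. destruct (Rle_dec l Sb) as [h|h]; auto.
  destruct (Hu (l - Sb)) as [N HN]; [lra|].
  specialize (HN N (le_n _)). specialize (Hs N). unfold Rdist in HN.
  apply Rabs_def2 in HN. lra.
Qed.

Lemma cv_ge (u : nat -> R) l Sb : Un_cv u l -> (forall n, Sb <= u n) -> Sb <= l.
Proof.
  intros Hu Hs. destruct (Rle_dec Sb l) as [h|h]; auto.
  destruct (Hu (Sb - l)) as [N HN]; [lra|].
  specialize (HN N (le_n _)). specialize (Hs N). unfold Rdist in HN.
  apply Rabs_def2 in HN. lra.
Qed.

Lemma cv_const c : Un_cv (fun _ => c) c.
Proof. intros e He. exists 0%nat. intros. unfold Rdist. rewrite Rminus_diag, Rabs_R0. lra. Qed.

Lemma cv_scal (u : nat -> R) l c : Un_cv u l -> Un_cv (fun n => c * u n) (c * l).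
Proof. intros. apply CV_mult; auto. apply cv_const. Qed.

Lemma cv_ev_zero (u : nat -> R) l J : Un_cv u l -> (forall j, (J <= j)%nat -> u j = 0) -> l = 0.
Proof.
  intros Hu H0. destruct (Req_dec l 0) as [h|h]; auto.
  exfalso. destruct (Hu (Rabs l)) as [N HN]; [apply Rabs_pos_lt; auto|].
    specialize (HN (max N J) (Nat.le_max_l _ _)). rewrite H0 in HN by lia.
  unfold Rdist in HN. rewrite Rminus_0_l, Rabs_Ropp in HN. lra.
Qed.

Lemma cv_sub (g v : nat -> R) l i (th : nat -> nat) : Un_cv g l ->
  (forall j, (i <= j)%nat -> (j <= th j)%nat /\ v j = g (th j)) -> Un_cv v l.
Proof.
  intros Hg H e He. destruct (Hg e He) as [N HN]. exists (max i N). intros n Hn.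
  destruct (H n) as [h1 h2]; [lia|]. rewrite h2. apply HN. lia.
Qed.

Lemma cv_shift (u : nat -> R) l : Un_cv u l -> Un_cv (fun n => u (S n)) l.
Proof. intros Hu e He. destruct (Hu e He) as [N HN]. exists N. intros. apply HN. lia. Qed.

Lemma cv_sum_fin (F : nat -> nat -> R) (l : nat -> R) N :
  (forall k, Un_cv (fun j => F j k) (l k)) -> Un_cv (fun j => sum_f_R0 (F j) N) (sum_f_R0 l N).
Proof.
  intros H. induction N; simpl. apply H. apply CV_plus; auto.
Qed.

Lemma abs_cv (A : nat -> R) (Sb : R) :
  (forall N, sum_f_R0 (fun k => Rabs (A k)) N <= Sb) -> exists l, Un_cv (fun N => sum_f_R0 A N) l.
Proof.
  intros H.
  assert (Hg : { l | Un_cv (fun N => sum_f_R0 (fun k => Rabs (A k)) N) l }).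
  { apply growing_cv. intro n. simpl. pose proof (Rabs_pos (A (S n))). lra.
    exists Sb. intros x [i ->]. apply H. }
  apply cv_cauchy_1 in Hg. apply cauchy_abs in Hg. apply cv_cauchy_2 in Hg.
  destruct Hg as [l Hl]. eauto.
Qed.

Lemma sum_nonneg (f : nat -> R) N : (forall k, 0 <= f k) -> 0 <= sum_f_R0 f N.
Proof. intros H. induction N; simpl; auto. specialize (H (S N)). lra. Qed.

Lemma sum_term_le (f : nat -> R) N k : (forall k, 0 <= f k) -> (k <= N)%nat -> f k <= sum_f_R0 f N.
Proof.
  intros H Hk. induction N.
  - assert (k = 0)%nat by lia. subst. simpl. lra.
  - destruct (Nat.eq_dec k (S N)) as [->|hne].
    + simpl. pose proof (sum_nonneg f N H). lra.
    + simpl. pose proof (H (S N)). assert (k <= N)%nat by lia. specialize (IHN H1). lra.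
Qed.

Lemma sum_swap (F : nat -> nat -> R) M N :
  sum_f_R0 (fun i => sum_f_R0 (fun k => F i k) N) M = sum_f_R0 (fun k => sum_f_R0 (fun i => F i k) M) N.
Proof.
  induction M; simpl. reflexivity.
  rewrite IHM. rewrite <- sum_plus. reflexivity.
Qed.

Lemma sum_scal (f : nat -> R) c N : sum_f_R0 (fun k => c * f k) N = c * sum_f_R0 f N.
Proof. induction N; simpl; [ring|rewrite IHN; ring]. Qed.

Lemma sum_ext (f g : nat -> R) N : (forall k, f k = g k) -> sum_f_R0 f N = sum_f_R0 g N.
Proof. intros H. induction N; simpl; rewrite ?IHN, ?H; reflexivity. Qed.

Lemma sum_S (f : nat -> R) N : sum_f_R0 f (S N) = f 0%nat + sum_f_R0 (fun k => f (S k)) N.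
Proof. rewrite decomp_sum by lia. reflexivity. Qed.

Lemma cs_sum (w c : nat -> R) N : (forall k, 0 < c k) ->
  (sum_f_R0 w N)^2 <= sum_f_R0 c N * sum_f_R0 (fun k => w k ^ 2 / c k) N.
Proof.
  intros Hc. induction N.
  - simpl. specialize (Hc 0%nat). assert (e : c 0%nat * (w 0%nat * (w 0%nat * 1) / c 0%nat) = w 0%nat * (w 0%nat * 1)) by (field; lra).
    rewrite e. lra.
  - rewrite !tech5. set (A := sum_f_R0 w N) in *. set (S0 := sum_f_R0 c N) in *.
    set (W := sum_f_R0 (fun k => w k ^ 2 / c k) N) in *.
    assert (hS : 0 < S0). { unfold S0. clear -Hc. induction N; simpl; auto. specialize (Hc (S N)). lra. }
    assert (hc := Hc (S N)). set (cc := c (S N)) in *. set (ww := w (S N)) in *.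
    assert (key : 2 * A * ww <= S0 * (ww^2/cc) + cc * (A^2 / S0)).
    { assert (e : S0 * (ww^2/cc) + cc * (A^2 / S0) - 2*A*ww = (S0*ww - cc*A)^2 / (cc*S0)) by (field; lra).
      assert (0 <= (S0*ww - cc*A)^2 / (cc*S0)).
      { unfold Rdiv. apply Rmult_le_pos. apply pow2_ge_0. apply Rlt_le, Rinv_0_lt_compat. nra. }
      lra. }
    assert (cc * (A^2/S0) <= cc * W).
    { apply Rmult_le_compat_l. lra. apply Rmult_le_reg_r with S0. lra.
      unfold Rdiv. rewrite Rmult_assoc, Rinv_l, Rmult_1_r by lra. nra. }
    assert (e2 : (S0 + cc) * (W + ww^2/cc) = S0 * W + S0 * (ww^2/cc) + cc * W + ww^2) by (field; lra).
    replace ((A + ww)^2) with (A^2 + 2*A*ww + ww^2) by ring.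
    rewrite e2. lra.
Qed.

Definition nsq (u : nat -> R) (N : nat) : R := sum_f_R0 (fun k => (u k)^2) N.

Lemma nsq_nonneg u N : 0 <= nsq u N.
Proof. apply sum_nonneg. intros; apply pow2_ge_0. Qed.

Lemma nsq_term u N k : (k <= N)%nat -> (u k)^2 <= nsq u N.
Proof. intros. apply (sum_term_le (fun k => (u k)^2)); auto. intros; apply pow2_ge_0. Qed.

Lemma l2_bound u s : l2sum u s -> forall N, nsq u N <= s.
Proof.
  intros H N. apply (growing_ineq (fun N => nsq u N)); auto.
  intro n. unfold nsq. simpl. pose proof (pow2_ge_0 (u (S n))). lra.
Qed.

Lemma psb_l2 u V : (forall N, nsq u N <= V) -> exists s, l2sum u s /\ s <= V.
Proof.
  intros H.
  assert (Hg : { l | Un_cv (fun N => nsq u N) l }).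
  { apply growing_cv. intro n. unfold nsq. simpl. pose proof (pow2_ge_0 (u (S n))). lra.
    exists V. intros x [i ->]. apply H. }
  destruct Hg as [l Hl]. exists l. split. exact Hl. apply (cv_le _ _ _ Hl H).
Qed.

Lemma geom_le q N : 0 < q < 1 -> sum_f_R0 (fun k => q ^ k) N <= 1 / (1 - q).
Proof.
  intros hq. rewrite tech3 by lra. unfold Rdiv. apply Rmult_le_compat_r.
  apply Rlt_le, Rinv_0_lt_compat; lra. pose proof (pow_lt q (S N)). lra.
Qed.

Lemma coord_bound z t V : 0 < t -> z^2 <= t^2 * V -> Rabs z <= t * (V + 1) / 2.
Proof.
  intros ht hz. assert (h2 : z^2 = Rabs z ^2) by (rewrite <- Rsqr_pow2 ; rewrite <- Rsqr_pow2; rewrite Rsqr_abs; reflexivity).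
  pose proof (Rabs_pos z). assert (0 <= (Rabs z - t)^2) by apply pow2_ge_0.
  apply Rmult_le_reg_l with (2*t). lra. nra.
Qed.

Lemma neumann (T : (nat -> R) -> (nat -> R)) q (hq0 : 0 < q) (hq1 : q < 1)
  (HT : forall v V, (forall N, nsq v N <= V) -> forall N, nsq (T v) N <= q^2 * V)
  w V (Hw : forall N, nsq w N <= V) :
  exists u, (forall i, Un_cv (fun N => sum_f_R0 (fun k => Nat.iter k T w i) N) (u i)) /\
            (forall M, nsq u M <= V / (1 - q)^2).
Proof.
  assert (HV : 0 <= V) by (pose proof (nsq_nonneg w 0); specialize (Hw 0%nat); lra).
  assert (Hit : forall k N, nsq (Nat.iter k T w) N <= (q^k)^2 * V).
  { induction k; intros N. simpl. specialize (Hw N). lra.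
    simpl Nat.iter. eapply Rle_trans. apply HT. apply IHk. simpl. right; ring. }
  assert (Hc : forall k i, Rabs (Nat.iter k T w i) <= q^k * ((V+1)/2)).
  { intros k i. pose proof (coord_bound (Nat.iter k T w i) (q^k) V (pow_lt _ k hq0)) as h.
    unfold Rdiv in *. rewrite <- Rmult_assoc. apply h.
    eapply Rle_trans. apply (nsq_term _ i i); lia. apply Hit. }
  assert (Hex : forall i, exists l, Un_cv (fun N => sum_f_R0 (fun k => Nat.iter k T w i) N) l).
  { intro i. apply abs_cv with (Sb := 1/(1-q) * ((V+1)/2)). intro N.
    eapply Rle_trans. apply sum_Rle. intros n _. apply (Hc n i).
    rewrite (sum_ext _ (fun k => (V+1)/2 * q^k)) by (intros; ring).
    rewrite sum_scal. apply Rle_trans with ((V+1)/2 * (1/(1-q))); [|right; ring].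
    apply Rmult_le_compat_l. lra. apply geom_le; lra. }
  exists (fun i => proj1_sig (constructive_indefinite_description _ (Hex i))).
  split. { intro i. exact (proj2_sig (constructive_indefinite_description _ (Hex i))). }
  intro M. set (u := fun i => proj1_sig (constructive_indefinite_description _ (Hex i))).
  assert (Hu : forall i, Un_cv (fun N => sum_f_R0 (fun k => Nat.iter k T w i) N) (u i)).
  { intro i. exact (proj2_sig (constructive_indefinite_description _ (Hex i))). }
  unfold nsq.
  apply (cv_le (fun N => sum_f_R0 (fun i => (sum_f_R0 (fun k => Nat.iter k T w i) N)^2) M)).
  { apply cv_sum_fin. intro i. simpl. apply CV_mult. apply Hu. apply CV_mult. apply Hu. apply cv_const. }
  intro N.
  eapply Rle_trans.
  { apply sum_Rle. intros i _. apply (cs_sum (fun k => Nat.iter k T w i) (fun k => q^k)).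
    intros; apply pow_lt; auto. }
  rewrite sum_scal.
  rewrite sum_swap.
  assert (Hg := geom_le q N (conj hq0 hq1)).
  assert (Hs : sum_f_R0 (fun k => sum_f_R0 (fun i => Nat.iter k T w i ^ 2 / q ^ k) M) N
               <= V * sum_f_R0 (fun k => q ^ k) N).
  { rewrite <- sum_scal. apply sum_Rle. intros k _.
    rewrite (sum_ext _ (fun i => / q^k * (Nat.iter k T w i ^ 2))) by (intros; unfold Rdiv; ring).
    rewrite sum_scal. specialize (Hit k M). unfold nsq in Hit.
    assert (0 < q^k) by (apply pow_lt; auto).
    apply Rmult_le_reg_l with (q^k). auto. rewrite <- Rmult_assoc, Rinv_r, Rmult_1_l by lra.
    nra. }
  assert (0 <= sum_f_R0 (fun k => q ^ k) N) by (apply sum_nonneg; intros; apply pow_le; lra).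
  assert (0 <= sum_f_R0 (fun k => sum_f_R0 (fun i => Nat.iter k T w i ^ 2 / q ^ k) M) N).
  { apply sum_nonneg. intros. apply sum_nonneg. intros. unfold Rdiv. apply Rmult_le_pos. apply pow2_ge_0.
    apply Rlt_le, Rinv_0_lt_compat, pow_lt; auto. }
  replace (V / (1-q)^2) with ((1/(1-q)) * (V * (1/(1-q)))) by (field; lra).
  apply Rmult_le_compat; auto. eapply Rle_trans. apply Hs. apply Rmult_le_compat_l; auto.
Qed.

Lemma Jop_lin a b u w al be j :
  Jop a b (fun k => al * u k + be * w k) j = al * Jop a b u j + be * Jop a b w j.
Proof. unfold Jop; destruct j; ring. Qed.

Lemma Jop_ext a b u w j : (forall k, u k = w k) -> Jop a b u j = Jop a b w j.
Proof. intros H. unfold Jop; destruct j; rewrite ?H; reflexivity. Qed.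

Lemma Jop_scal a b u c j : Jop a b (fun k => c * u k) j = c * Jop a b u j.
Proof. unfold Jop; destruct j; ring. Qed.

Lemma Jop_sum a b (F : nat -> nat -> R) N j :
  Jop a b (fun i => sum_f_R0 (fun k => F k i) N) j = sum_f_R0 (fun k => Jop a b (F k) j) N.
Proof.
  induction N.
  - simpl. reflexivity.
  - rewrite tech5. rewrite <- IHN. unfold Jop; destruct j; simpl; ring.
Qed.

Lemma Jop_cv a b (P : nat -> nat -> R) u j :
  (forall i, Un_cv (fun N => P N i) (u i)) -> Un_cv (fun N => Jop a b (P N) j) (Jop a b u j).
Proof.
  intros H. unfold Jop; destruct j.
  - apply CV_plus. apply CV_plus; apply cv_scal; apply H. apply cv_const.
  - apply CV_plus. apply CV_plus; apply cv_scal; apply H. apply cv_scal; apply H.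
Qed.

Lemma nsq_scal u c N : nsq (fun k => c * u k) N = c^2 * nsq u N.
Proof. unfold nsq. rewrite <- sum_scal. apply sum_ext. intros; ring. Qed.

Lemma nsq_mono u N M : (N <= M)%nat -> nsq u N <= nsq u M.
Proof.
  intros H. induction H. lra. eapply Rle_trans. apply IHle. unfold nsq. simpl.
  pose proof (pow2_ge_0 (u (S m))). lra.
Qed.

Lemma psb_comb u w U W al be :
  (forall N, nsq u N <= U) -> (forall N, nsq w N <= W) ->
  forall N, nsq (fun k => al * u k + be * w k) N <= 2*al^2*U + 2*be^2*W.
Proof.
  intros Hu Hw N. eapply Rle_trans.
  - apply (sum_Rle _ (fun k => 2*al^2 * (u k)^2 + 2*be^2 * (w k)^2)).
    intros k _. pose proof (pow2_ge_0 (al * u k - be * w k)). nra.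
  - rewrite sum_plus, !sum_scal. specialize (Hu N); specialize (Hw N). unfold nsq in *.
    assert (0 <= al^2) by apply pow2_ge_0. assert (0 <= be^2) by apply pow2_ge_0. nra.
Qed.

Lemma zero_of d s r : l2sum d s -> (forall N, nsq d N <= r * s) -> r < 1 -> forall k, d k = 0.
Proof.
  intros Hs Hb Hr k.
  assert (s0 : 0 <= s) by (eapply Rle_trans; [apply (nsq_nonneg d 0)|apply (l2_bound _ _ Hs)]).
  assert (s <= r * s) by (apply (cv_le _ _ _ Hs); apply Hb).
  assert (s = 0) by nra.
  pose proof (nsq_term d k k (le_n _)). pose proof (l2_bound _ _ Hs k).
  assert (d k ^2 = 0) by (pose proof (pow2_ge_0 (d k)); lra).
  nra.
Qed.

Lemma Jnorm a b M (hM : 0 <= M) (Ha : forall n, (1 <= n)%nat -> Rabs (a n) <= M)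
  (Hb : forall n, (1 <= n)%nat -> Rabs (b n) <= M) u V :
  (forall N, nsq u N <= V) -> forall N, nsq (Jop a b u) N <= 9 * M^2 * V.
Proof.
  intros Hu N.
  set (g := fun k => match k with O => 0 | S k' => (u k')^2 end).
  assert (Hsq : forall c, Rabs c <= M -> c^2 <= M^2).
  { intros c hc. pose proof (Rabs_pos c). rewrite <- (pow2_abs c). nra. }
  eapply Rle_trans.
  - apply (sum_Rle _ (fun k => 3 * M^2 * ((u k)^2 + (u (S k))^2 + g k))).
    intros k _. unfold Jop, g. destruct k.
    + pose proof (Hsq (b 1%nat) (Hb 1%nat (le_n _))). pose proof (Hsq (a 1%nat) (Ha 1%nat (le_n _))).
      assert (0 <= (u 0%nat)^2) by apply pow2_ge_0. assert (0 <= (u 1%nat)^2) by apply pow2_ge_0.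
      assert (forall p q : R, (p + q + 0)^2 <= 2 * (p^2 + q^2)) by (intros p q; pose proof (pow2_ge_0 (p - q)); nra).
      specialize (H3 (b 1%nat * u 0%nat) (a 1%nat * u 1%nat)).
      assert ((b 1%nat * u 0%nat)^2 <= M^2 * (u 0%nat)^2) by (rewrite Rpow_mult_distr; nra).
      assert ((a 1%nat * u 1%nat)^2 <= M^2 * (u 1%nat)^2) by (rewrite Rpow_mult_distr; nra).
      nra.
    + set (B := b (S (S k))). set (A1 := a (S (S k))). set (A0 := a (S k)).
      pose proof (Hsq B (Hb (S (S k)) ltac:(lia))). pose proof (Hsq A1 (Ha (S (S k)) ltac:(lia))). pose proof (Hsq A0 (Ha (S k) ltac:(lia))).
      set (x1 := u (S k)). set (x2 := u (S (S k))). set (x0 := u k).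
      assert (H3 : forall p q r : R, (p + q + r)^2 <= 3 * (p^2 + q^2 + r^2))
        by (intros p q r; pose proof (pow2_ge_0 (p - q)); pose proof (pow2_ge_0 (p - r));
            pose proof (pow2_ge_0 (q - r)); nra).
      specialize (H3 (B * x1) (A1 * x2) (A0 * x0)).
      assert (0 <= x1^2) by apply pow2_ge_0. assert (0 <= x2^2) by apply pow2_ge_0. assert (0 <= x0^2) by apply pow2_ge_0.
      assert ((B * x1)^2 <= M^2 * x1^2) by (rewrite Rpow_mult_distr; nra).
      assert ((A1 * x2)^2 <= M^2 * x2^2) by (rewrite Rpow_mult_distr; nra).
      assert ((A0 * x0)^2 <= M^2 * x0^2) by (rewrite Rpow_mult_distr; nra).
      nra.
  - rewrite sum_scal, !sum_plus.
    assert (h1 : sum_f_R0 (fun k => u (S k) ^ 2) N <= V).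
    { pose proof (Hu (S N)). unfold nsq in H. rewrite sum_S in H. pose proof (pow2_ge_0 (u 0%nat)). lra. }
    assert (h2 : sum_f_R0 g N <= V).
    { destruct N. simpl. unfold g. pose proof (Hu 0%nat). pose proof (nsq_nonneg u 0). lra.
      rewrite sum_S. simpl (g 0%nat). rewrite Rplus_0_l.
      pose proof (Hu N). unfold nsq in H. exact H. }
    pose proof (Hu N). unfold nsq in H.
    assert (0 <= M^2) by apply pow2_ge_0. nra.
Qed.

Lemma l2_psb u : l2 u -> exists s, l2sum u s /\ forall N, nsq u N <= s.
Proof. intros [s Hs]. exists s. split; auto. apply l2_bound; auto. Qed.

Lemma sum_minus_scal (f g : nat -> R) c N :
  sum_f_R0 (fun k => f k - c * g k) N = sum_f_R0 f N - c * sum_f_R0 g N.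
Proof. induction N; simpl; [ring| rewrite IHN; ring]. Qed.

Lemma iter_psb (T : (nat -> R) -> (nat -> R)) q
  (HT : forall v V, (forall N, nsq v N <= V) -> forall N, nsq (T v) N <= q^2 * V) w V :
  (forall N, nsq w N <= V) -> forall k, exists W, forall N, nsq (Nat.iter k T w) N <= W.
Proof.
  intros Hw k. induction k. exists V; exact Hw.
  destruct IHk as [W HW]. exists (q^2 * W). simpl. apply HT. exact HW.
Qed.

Lemma spec_bound a b M (hM : 0 <= M) (Ha : forall n, (1 <= n)%nat -> Rabs (a n) <= M)
  (Hb : forall n, (1 <= n)%nat -> Rabs (b n) <= M) x : 6*M+1 < Rabs x -> resolvent_set a b x.
Proof.
  intros Hx.
  assert (hx2 : 36 * M^2 + 1 <= x^2).
  { rewrite <- (pow2_abs x). pose proof (Rabs_pos x). set (t := Rabs x) in *. assert ((6*M+1)*(6*M+1) <= t*t) by (apply Rmult_le_compat; lra). simpl. nra. }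
  assert (hx0 : x <> 0) by (intro h; rewrite h in hx2; pose proof (pow2_ge_0 M); replace (0^2) with 0 in hx2 by ring; lra).
  set (T := fun z : nat -> R => fun k => / x * Jop a b z k).
  assert (HT : forall v V, (forall N, nsq v N <= V) -> forall N, nsq (T v) N <= (1/2)^2 * V).
  { intros v V Hv N. unfold T. rewrite nsq_scal.
    pose proof (Jnorm a b M hM Ha Hb v V Hv N).
    assert (V0 : 0 <= V) by (pose proof (nsq_nonneg v 0); specialize (Hv 0%nat); lra).
    assert (e : (/x)^2 = / (x^2)) by (field; auto). rewrite e.
    apply Rmult_le_reg_l with (x^2). nra. rewrite <- Rmult_assoc, Rinv_r, Rmult_1_l by nra. nra. }
  exists 4. intros v Hv. destruct (l2_psb v Hv) as [sv [Hsv Hsvb]].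
  destruct (neumann T (1/2) ltac:(lra) ltac:(lra) HT v sv Hsvb) as [u0 [Hu0 Hu0b]].
  set (u := fun i => - / x * u0 i).
  assert (Hub : forall N, nsq u N <= 4 * sv).
  { intro N. unfold u. rewrite nsq_scal. specialize (Hu0b N).
    replace (sv / (1 - 1/2)^2) with (4 * sv) in Hu0b by field.
    assert (e : (- / x)^2 = / (x^2)) by (field; auto). rewrite e.
    assert (0 <= sv) by (pose proof (nsq_nonneg v 0); specialize (Hsvb 0%nat); lra).
    apply Rmult_le_reg_l with (x^2). nra. rewrite <- Rmult_assoc, Rinv_r, Rmult_1_l by nra.
    pose proof (nsq_nonneg u0 N). nra. }
  assert (Heq : forall i, Jop a b u i - x * u i = v i).
  { intro i.
    assert (HJ : Jop a b u0 i = x * (u0 i - v i)).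
    { apply (UL_sequence (fun N => Jop a b (fun j => sum_f_R0 (fun k => Nat.iter k T v j) N) i)).
      apply Jop_cv. apply Hu0.
      apply (cv_sub (fun N => x * (sum_f_R0 (fun k => Nat.iter k T v i) N - v i)) _ _ 0 S).
      apply cv_scal. apply CV_minus. apply Hu0. apply cv_const.
      intros j _. split. lia.
      rewrite Jop_sum. rewrite sum_S. simpl Nat.iter at 1.
      replace (x * (Nat.iter 0 T v i + sum_f_R0 (fun k => Nat.iter (S k) T v i) j - v i))
        with (x * sum_f_R0 (fun k => Nat.iter (S k) T v i) j) by (simpl; ring).
      rewrite <- sum_scal. apply sum_ext. intro k. simpl. unfold T. rewrite <- Rmult_assoc, Rinv_r, Rmult_1_l by auto. reflexivity. }
    unfold u. rewrite Jop_scal. rewrite HJ. field. auto. }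
  exists u. split; [|split; [|split]].
  - destruct (psb_l2 u _ Hub) as [s [Hs _]]. exists s; exact Hs.
  - exact Heq.
  - intros su sv' Hsu Hsv'. rewrite (uniqueness_sum _ _ _ Hsv' Hsv).
    apply (cv_le _ _ _ Hsu). apply Hub.
  - intros w Hw Hweq.
    destruct (l2_psb w Hw) as [sw [_ Hswb]].
    pose proof (psb_comb w u sw (4*sv) 1 (-1) Hswb Hub) as Hd.
    destruct (psb_l2 _ _ Hd) as [sd [Hsd _]].
    set (d := fun k => 1 * w k + -1 * u k) in *.
    assert (HJd : forall k, Jop a b d k = x * d k).
    { intro k. unfold d. rewrite Jop_lin. specialize (Hweq k). specialize (Heq k). lra. }
    assert (Hdb : forall N, nsq d N <= (9 * M^2 / x^2) * sd).
    { intro N. pose proof (Jnorm a b M hM Ha Hb d sd (l2_bound _ _ Hsd) N) as h.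
      unfold nsq in h. rewrite (sum_ext _ (fun k => x^2 * (d k)^2)) in h by (intro k; rewrite HJd; ring).
      rewrite sum_scal in h. fold (nsq d N) in h.
      apply Rmult_le_reg_l with (x^2). nra. unfold Rdiv. 
      replace (x ^ 2 * (9 * M ^ 2 * / x ^ 2 * sd)) with (9 * M^2 * sd) by (field; auto). exact h. }
    intro k. pose proof (zero_of d sd _ Hsd Hdb) as Z.
    assert (9 * M ^ 2 / x ^ 2 < 1).
    { apply Rmult_lt_reg_r with (x^2). nra. unfold Rdiv. rewrite Rmult_assoc, Rinv_l, Rmult_1_r by nra. nra. }
    specialize (Z H k). unfold d in Z. lra.
Qed.

Lemma res_open a b x : resolvent_set a b x ->
  exists del, 0 < del /\ forall y, Rabs (y - x) < del -> resolvent_set a b y.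
Proof.
  intros [C HC]. set (C' := Rmax C 1).
  assert (hC' : 1 <= C') by apply Rmax_r.
  assert (Hex : forall v, exists u, l2 v -> l2 u /\ (forall k, Jop a b u k - x * u k = v k) /\
     (forall su sv, l2sum u su -> l2sum v sv -> su <= C' * sv) /\
     (forall w, l2 w -> (forall k, Jop a b w k - x * w k = v k) -> forall k, w k = u k)).
  { intro v. destruct (classic (l2 v)) as [Hv|Hv].
    - destruct (HC v Hv) as [u [h1 [h2 [h3 h4]]]]. exists u. intros _. split; [|split; [|split]]; auto.
      intros su sv Hsu Hsv. eapply Rle_trans. apply h3; eauto.
      apply Rmult_le_compat_r. eapply Rle_trans. apply (nsq_nonneg v 0). apply (l2_bound _ _ Hsv).
      apply Rmax_l.
    - exists v. intro; contradiction. }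
  set (Rs := fun v => proj1_sig (constructive_indefinite_description _ (Hex v))).
  assert (HR : forall v, l2 v -> l2 (Rs v) /\ (forall k, Jop a b (Rs v) k - x * Rs v k = v k) /\
     (forall su sv, l2sum (Rs v) su -> l2sum v sv -> su <= C' * sv) /\
     (forall w, l2 w -> (forall k, Jop a b w k - x * w k = v k) -> forall k, w k = Rs v k)).
  { intro v. exact (proj2_sig (constructive_indefinite_description _ (Hex v))). }
  exists (1 / (2 * C')). split. { apply Rdiv_lt_0_compat; lra. }
  intros y Hy. set (e := y - x) in *.
  assert (he : e^2 * C' <= 1/4).
  { rewrite <- (pow2_abs e). pose proof (Rabs_pos e).
    assert (Rabs e * (2 * C') <= 1).
    { apply Rlt_le. apply Rmult_lt_reg_r with (/(2*C')). apply Rinv_0_lt_compat; lra.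
      rewrite Rmult_assoc, Rinv_r, Rmult_1_r by lra. unfold Rdiv in Hy. lra. }
    set (t := Rabs e) in *.
    assert (h1 : (t * (2 * C')) * (t * (2 * C')) <= 1) by (apply Rle_trans with (1 * 1); [apply Rmult_le_compat; nra | lra]).
    assert (h2 : t^2 * C' <= t^2 * C' * C') by (assert (0 <= t^2 * C') by (apply Rmult_le_pos; [apply pow2_ge_0|lra]); nra).
    assert (h3 : t^2 * C' * C' = (t * (2 * C')) * (t * (2 * C')) / 4) by (simpl; field).
    lra. }
  set (T := fun z : nat -> R => Rs (fun k => e * z k)).
  assert (HT : forall v V, (forall N, nsq v N <= V) -> forall N, nsq (T v) N <= (1/2)^2 * V).
  { intros v V Hv N.
    assert (V0 : 0 <= V) by (pose proof (nsq_nonneg v 0); specialize (Hv 0%nat); lra).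
    assert (Hev : forall N, nsq (fun k => e * v k) N <= e^2 * V).
    { intro n. rewrite nsq_scal. apply Rmult_le_compat_l. apply pow2_ge_0. apply Hv. }
    destruct (psb_l2 _ _ Hev) as [s [Hs Hsle]].
    destruct (HR (fun k => e * v k) (ex_intro _ s Hs)) as [[su Hsu] [_ [h3 _]]].
    specialize (h3 su s Hsu Hs). unfold T. eapply Rle_trans. apply (l2_bound _ _ Hsu).
    eapply Rle_trans. apply h3. 
    apply Rle_trans with (C' * (e^2 * V)). apply Rmult_le_compat_l; lra. nra. }
  exists (4 * C'). intros v Hv. destruct (l2_psb v Hv) as [sv [Hsv Hsvb]].
  destruct (HR v Hv) as [[s0 Hs0] [Rv2 [Rv3 Rv4]]].
  assert (Hw0 : forall N, nsq (Rs v) N <= C' * sv).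
  { intro N. eapply Rle_trans. apply (l2_bound _ _ Hs0). apply Rv3; auto. }
  destruct (neumann T (1/2) ltac:(lra) ltac:(lra) HT (Rs v) _ Hw0) as [u [Hu Hub]].
  assert (Hub' : forall N, nsq u N <= 4 * C' * sv).
  { intro N. specialize (Hub N). replace (C' * sv / (1 - 1/2)^2) with (4 * C' * sv) in Hub by field. auto. }
  assert (Hit : forall k, l2 (Nat.iter k T (Rs v))).
  { intro k. destruct (iter_psb T (1/2) HT (Rs v) _ Hw0 k) as [W HW].
    destruct (psb_l2 _ _ HW) as [s [Hs _]]. exists s; auto. }
  assert (HitS : forall k i, Jop a b (Nat.iter (S k) T (Rs v)) i - x * Nat.iter (S k) T (Rs v) i
                             = e * Nat.iter k T (Rs v) i).
  { intros k i. simpl. unfold T. 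
    assert (Hl : l2 (fun j => e * Nat.iter k T (Rs v) j)).
    { destruct (l2_psb _ (Hit k)) as [s [_ Hs]].
      assert (forall N, nsq (fun j => e * Nat.iter k T (Rs v) j) N <= e^2 * s)
        by (intro N; rewrite nsq_scal; apply Rmult_le_compat_l; [apply pow2_ge_0|apply Hs]).
      destruct (psb_l2 _ _ H) as [s' [Hs' _]]. exists s'; auto. }
    destruct (HR _ Hl) as [_ [h2 _]]. apply h2. }
  assert (Heq : forall i, Jop a b u i - y * u i = v i).
  { intro i.
    assert (Hl : Jop a b u i - x * u i = v i + e * u i).
    { apply (UL_sequence (fun N => Jop a b (fun j => sum_f_R0 (fun k => Nat.iter k T (Rs v) j) (S N)) i
                                    - x * sum_f_R0 (fun k => Nat.iter k T (Rs v) i) (S N))).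
      - apply CV_minus. apply (Jop_cv a b (fun N j => sum_f_R0 (fun k => Nat.iter k T (Rs v) j) (S N))).
        intro j. apply cv_shift with (u := fun N => sum_f_R0 (fun k => Nat.iter k T (Rs v) j) N). apply Hu.
        apply cv_scal. apply cv_shift with (u := fun N => sum_f_R0 (fun k => Nat.iter k T (Rs v) i) N). apply Hu.
      - apply (cv_sub (fun N => v i + e * sum_f_R0 (fun k => Nat.iter k T (Rs v) i) N) _ _ 0 (fun j => j)).
        apply CV_plus. apply cv_const. apply cv_scal. apply Hu.
        intros j _. split. lia.
        rewrite Jop_sum. rewrite <- sum_minus_scal. rewrite sum_S. simpl Nat.iter at 1 2.
        rewrite Rv2. f_equal. rewrite <- sum_scal. apply sum_ext. intro k. apply HitS. }
    unfold e in Hl. lra. }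
  exists u. split; [|split; [|split]].
  - destruct (psb_l2 u _ Hub') as [s [Hs _]]. exists s; exact Hs.
  - exact Heq.
  - intros su sv' Hsu Hsv'. rewrite (uniqueness_sum _ _ _ Hsv' Hsv).
    apply (cv_le _ _ _ Hsu). intro N. specialize (Hub' N). unfold nsq in Hub'. lra.
  - intros w Hw Hweq.
    destruct (l2_psb w Hw) as [sw [_ Hswb]].
    pose proof (psb_comb w u sw (4*C'*sv) 1 (-1) Hswb Hub') as Hd.
    destruct (psb_l2 _ _ Hd) as [sd [Hsd _]].
    set (d := fun k => 1 * w k + -1 * u k) in *.
    assert (HJd : forall k, Jop a b d k - x * d k = e * d k).
    { intro k. unfold d. rewrite Jop_lin. specialize (Hweq k). specialize (Heq k). unfold e. lra. }
    assert (Hed : l2 (fun k => e * d k)).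
    { assert (forall N, nsq (fun k => e * d k) N <= e^2 * sd)
        by (intro N; rewrite nsq_scal; apply Rmult_le_compat_l; [apply pow2_ge_0|apply (l2_bound _ _ Hsd)]).
      destruct (psb_l2 _ _ H) as [s' [Hs' _]]. exists s'; auto. }
    destruct (HR _ Hed) as [_ [_ [_ h4]]].
    assert (HTd : forall k, d k = T d k).
    { intro k. unfold T. apply h4. exists sd; auto. exact HJd. }
    assert (Hdb : forall N, nsq d N <= (1/2)^2 * sd).
    { intro N. unfold nsq. rewrite (sum_ext _ _ N (fun k => f_equal (fun t => t^2) (HTd k))). apply HT.
      apply (l2_bound _ _ Hsd). }
    intro k. pose proof (zero_of d sd _ Hsd Hdb ltac:(lra) k) as Z. unfold d in Z. lra.
Qed.

Lemma opoly_S a b n x :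
  opoly a b (S n) x = ((x - b (S n)) * opoly a b n x - a n * snd (pp a b n x)) / a (S n).
Proof. unfold opoly. simpl. destruct (pp a b n x). reflexivity. Qed.

Lemma snd_pp_S a b n x : snd (pp a b (S n) x) = opoly a b n x.
Proof. unfold opoly. simpl. destruct (pp a b n x). reflexivity. Qed.

Definition Wn a b x (N : nat) : R := match N with O => 0 | S k => opoly a b k x end.

Lemma Wn_snd a b x k : Wn a b x k = snd (pp a b k x).
Proof. destruct k. reflexivity. simpl Wn. rewrite snd_pp_S. reflexivity. Qed.

Lemma Wn_rec a b x k : a (S k) <> 0 ->
  a (S k) * Wn a b x (S (S k)) + b (S k) * Wn a b x (S k) + a k * Wn a b x k = x * Wn a b x (S k).
Proof.
  intros h. simpl Wn at 1 2 4. rewrite opoly_S. rewrite Wn_snd. field. auto.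
Qed.

Lemma CD_eq a b n x : CD_kernel a b n x x = sum_f_R0 (fun j => (opoly a b j x)^2) n.
Proof. unfold CD_kernel. apply sum_ext. intros; ring. Qed.

Lemma K_ge1 a b n x : 1 <= CD_kernel a b n x x.
Proof.
  rewrite CD_eq. pose proof (sum_term_le (fun j => (opoly a b j x)^2) n 0 (fun k => pow2_ge_0 _) ltac:(lia)).
  cbv beta in H. replace (opoly a b 0 x ^ 2) with 1 in H by (unfold opoly; simpl; ring). exact H.
Qed.

Lemma K_ge_term a b n x : (opoly a b n x)^2 <= CD_kernel a b n x x.
Proof. rewrite CD_eq. apply (sum_term_le (fun j => (opoly a b j x)^2)). intros; apply pow2_ge_0. lia. Qed.

Lemma rev_bound (h : nat -> R) : h 0%nat = 0 -> (forall k, 0 <= h k) ->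
  forall n N, sum_f_R0 (fun k => h (n - k)%nat) N <= sum_f_R0 h n.
Proof.
  intros h0 hp n. induction n; intros N.
  - rewrite (sum_ext _ (fun _ => 0)). 2:{ intro k. simpl. exact h0. }
    simpl. rewrite h0. clear. induction N; simpl; lra.
  - destruct N.
    + simpl. replace (S n - 0)%nat with (S n) by lia. pose proof (sum_nonneg h n hp). lra.
    + rewrite sum_S. rewrite tech5. replace (S n - 0)%nat with (S n) by lia. specialize (IHn N).
      rewrite (sum_ext (fun k => h (n - k)%nat) (fun k => h (S n - S k)%nat)) in IHn by reflexivity. lra.
Qed.

Lemma Wn_sum a b x n : sum_f_R0 (fun i => (Wn a b x i)^2) (S n) = CD_kernel a b n x x.
Proof. rewrite sum_S. rewrite CD_eq. simpl Wn at 1. rewrite Rplus_comm. replace (0^2) with 0 by ring.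
  rewrite Rplus_0_r. apply sum_ext. reflexivity. Qed.

Lemma terms_cv0 f s : infinite_sum f s -> Un_cv f 0.
Proof.
  intros H e He. destruct (H (e/2)) as [N HN]; [lra|]. exists (S N). intros n Hn.
  destruct n. lia. pose proof (HN n ltac:(lia)). pose proof (HN (S n) ltac:(lia)).
  unfold Rdist in *. simpl in H1. rewrite Rminus_0_r.
  replace (f (S n)) with ((sum_f_R0 f n + f (S n) - s) - (sum_f_R0 f n - s)) by ring.
  eapply Rle_lt_trans. apply Rabs_triang. rewrite Rabs_Ropp. lra.
Qed.

Lemma eigen_decay a b x : (forall k, a (S k) <> 0) -> eigenvalue a b x ->
  Un_cv (fun n => (opoly a b n x)^2) 0.
Proof.
  intros Ha [u [[s Hs] [[k0 Hk0] HJ]]].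
  assert (Hu : forall k, u k = u 0%nat * opoly a b k x /\ u (S k) = u 0%nat * opoly a b (S k) x).
  { induction k.
    - split. unfold opoly; simpl; ring.
      pose proof (HJ 0%nat) as h. unfold Jop in h. rewrite opoly_S. unfold opoly; simpl.
      apply Rmult_eq_reg_l with (a 1%nat). 2: apply Ha. field_simplify; [|apply Ha]. lra.
    - destruct IHk as [h1 h2]. split; auto.
      pose proof (HJ (S k)) as h. unfold Jop in h. rewrite opoly_S. rewrite snd_pp_S.
      apply Rmult_eq_reg_l with (a (S (S k))). 2: apply Ha.
      rewrite h2, h1 in h. field_simplify; [|apply Ha]. lra. }
  assert (h0 : u 0%nat <> 0).
  { intro h. apply Hk0. destruct (Hu k0) as [e _]. rewrite e, h. ring. }
  pose proof (terms_cv0 _ _ Hs) as Ht.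
  apply (cv_sub (fun n => / (u 0%nat)^2 * (u n)^2) _ _ 0 (fun j => j)).
  - replace 0 with (/ (u 0%nat)^2 * 0) by ring. apply cv_scal. exact Ht.
  - intros j _. split; auto. destruct (Hu j) as [e _]. rewrite e. field. auto.
Qed.

Lemma inc_mono (phi : nat -> nat) : (forall j, (phi j < phi (S j))%nat) -> forall j k, (j < k)%nat -> (phi j < phi k)%nat.
Proof. intros H j k Hjk. induction Hjk. apply H. specialize (H m). lia. Qed.

Lemma inc_ge (phi : nat -> nat) : (forall j, (phi j < phi (S j))%nat) -> forall j, (j <= phi j)%nat.
Proof. intros H j. induction j. lia. specialize (H j). lia. Qed.

Lemma cv_sub_ex (g v : nat -> R) l (i : nat) : Un_cv g l ->
  (forall j, (i <= j)%nat -> exists t, (j <= t)%nat /\ v j = g t) -> Un_cv v l.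
Proof.
  intros Hg H e He. destruct (Hg e He) as [N HN]. exists (max i N). intros n Hn.
  destruct (H n) as [t [h1 h2]]; [lia|]. rewrite h2. apply HN. lia.
Qed.

Lemma BWs (u : nat -> R) : exists phi : nat -> nat, (forall j, (phi j < phi (S j))%nat) /\
  ((exists B, forall j, Rabs (u j) <= B) -> exists l, Un_cv (fun j => u (phi j)) l).
Proof.
  destruct (classic (exists B, forall j, Rabs (u j) <= B)) as [[B HB]|HnB].
  2:{ exists S. split. intro; lia. intro; contradiction. }
  destruct (Bolzano_Weierstrass u (fun c => -B <= c <= B) (compact_P3 (-B) B)) as [l Hl].
  { intro n. specialize (HB n). pose proof (Rle_abs (u n)). pose proof (Rle_abs (- u n)). rewrite Rabs_Ropp in H0. lra. }
  assert (Hch : forall N j : nat, exists p, (N <= p)%nat /\ Rabs (u p - l) < / INR (S j)).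
  { intros N j. assert (hp : 0 < / INR (S j)) by (apply Rinv_0_lt_compat, lt_0_INR; lia).
    destruct (Hl (disc l (mkposreal _ hp)) N) as [p [h1 h2]].
    - exists (mkposreal _ hp). intros y hy. exact hy.
    - exists p. split; auto. }
  set (ch := fun N j => proj1_sig (constructive_indefinite_description _ (Hch N j))).
  assert (Hc : forall N j, (N <= ch N j)%nat /\ Rabs (u (ch N j) - l) < / INR (S j)).
  { intros N j. exact (proj2_sig (constructive_indefinite_description _ (Hch N j))). }
  set (phi := fix f (j : nat) : nat := match j with O => ch 0%nat 0%nat | S j' => ch (S (f j')) j end).
  exists phi. split.
  - intro j. simpl. destruct (Hc (S (phi j)) (S j)) as [h _]. unfold phi in h |- *. lia.
  - intros _. exists l. intros e He. destruct (archimed_cor1 e He) as [N [hN hN0]].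
    exists N. intros n Hn. unfold Rdist.
    assert (Hb : Rabs (u (phi n) - l) < / INR (S n)).
    { destruct n; simpl; apply Hc. }
    eapply Rlt_le_trans. apply Hb. apply Rle_trans with (/ INR N); [|lra].
    apply Rinv_le_contravar. apply lt_0_INR; lia. apply le_INR. lia.
Qed.

Lemma diag (f : nat -> nat -> R) : (forall i, exists B, forall j, Rabs (f i j) <= B) ->
  exists d : nat -> nat, (forall j, (d j < d (S j))%nat) /\
    forall i, exists l, Un_cv (fun j => f i (d j)) l.
Proof.
  intros Hf.
  set (E := fun u : nat -> R => proj1_sig (constructive_indefinite_description _ (BWs u))).
  assert (HE : forall u, (forall j, (E u j < E u (S j))%nat) /\
     ((exists B, forall j, Rabs (u j) <= B) -> exists l, Un_cv (fun j => u (E u j)) l)).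
  { intro u. exact (proj2_sig (constructive_indefinite_description _ (BWs u))). }
  set (psi := fix p (i : nat) : nat -> nat := match i with
     | O => E (f 0%nat)
     | S i' => fun j => p i' (E (fun t => f i (p i' t)) j) end).
  assert (Hinc : forall i j, (psi i j < psi i (S j))%nat).
  { induction i; intro j. simpl. apply HE.
    simpl. fold psi. apply inc_mono. apply IHi. apply HE. }
  assert (Hconv : forall i, exists l, Un_cv (fun j => f i (psi i j)) l).
  { destruct i. simpl. apply HE. apply Hf.
    simpl. fold psi. apply (proj2 (HE (fun t => f (S i) (psi i t)))).
    destruct (Hf (S i)) as [B HB]. exists B. intro j. apply HB. }
  assert (Hsub : forall i k j, exists t, (j <= t)%nat /\ psi (i + k)%nat j = psi i t).
  { intros i k. induction k; intro j.
    - exists j. rewrite Nat.add_0_r. split; auto.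
    - rewrite Nat.add_succ_r. simpl. fold psi.
      destruct (IHk (E (fun t => f (S (i + k)) (psi (i + k)%nat t)) j)) as [t [h1 h2]].
      exists t. split. pose proof (inc_ge _ (proj1 (HE (fun t => f (S (i + k)) (psi (i + k)%nat t)))) j). lia.
      exact h2. }
  exists (fun j => psi j j). split.
  - intro j. simpl. fold psi. apply inc_mono. apply Hinc.
    pose proof (inc_ge _ (proj1 (HE (fun t => f (S j) (psi j t)))) (S j)). lia.
  - intro i. destruct (Hconv i) as [l Hl]. exists l.
    apply (cv_sub_ex _ _ _ i Hl). intros j Hj.
    destruct (Hsub i (j - i)%nat j) as [t [h1 h2]]. exists t. split; auto.
    replace (i + (j - i))%nat with j in h2 by lia. rewrite h2. reflexivity.
Qed.

Lemma zto_sub (p k : nat) : Z.to_nat (Z.of_nat p + - Z.of_nat k) = (p - k)%nat.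
Proof. lia. Qed.

Lemma extZ_pos (a : nat -> R) (N : Z) : (0 < N)%Z -> extZ a N = a (Z.to_nat N).
Proof. intros h. unfold extZ. destruct (Z.ltb_spec 0 N); [reflexivity| lia]. Qed.

Lemma extZ_bound (a : nat -> R) A : 0 <= A -> (forall n, (1 <= n)%nat -> Rabs (a n) <= A) ->
  forall N, Rabs (extZ a N) <= A.
Proof.
  intros h0 h N. unfold extZ. destruct (Z.ltb_spec 0 N). apply h. lia. rewrite Rabs_R0. auto.
Qed.

Lemma recZ a b x (N : Z) : (1 <= N)%Z -> a (Z.to_nat N) <> 0 ->
  extZ a N * Wn a b x (Z.to_nat (N + 1)) + extZ b N * Wn a b x (Z.to_nat N)
  + extZ a (N - 1) * Wn a b x (Z.to_nat (N - 1)) = x * Wn a b x (Z.to_nat N).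
Proof.
  intros h1 h2. destruct (Z.to_nat N) as [|k] eqn:Ek; [lia|].
  assert (hN : N = Z.of_nat (S k)) by lia. subst N.
  rewrite Nat2Z.id in *.
  replace (Z.of_nat (S k) + 1)%Z with (Z.of_nat (S (S k))) by lia.
  replace (Z.of_nat (S k) - 1)%Z with (Z.of_nat k) by lia.
  rewrite !Nat2Z.id. rewrite !extZ_pos by lia. rewrite !Nat2Z.id.
  rewrite <- (Wn_rec a b x k h2).
  assert (e : extZ a (Z.of_nat k) * Wn a b x k = a k * Wn a b x k).
  { destruct k. simpl. ring. rewrite extZ_pos by lia. rewrite Nat2Z.id. reflexivity. }
  rewrite e. ring.
Qed.

Definition zd (k : nat) : Z := if Nat.odd k then (- Z.of_nat (S (Nat.div2 k)))%Z else Z.of_nat (Nat.div2 k).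
Definition ze (z : Z) : nat := if (0 <=? z)%Z then (2 * Z.to_nat z)%nat else S (2 * (Z.to_nat (- z) - 1)).

Lemma odd_double n : Nat.odd (2 * n) = false.
Proof. rewrite Nat.odd_mul. reflexivity. Qed.
Lemma odd_sdouble n : Nat.odd (S (2 * n)) = true.
Proof. rewrite Nat.odd_succ, Nat.even_mul. reflexivity. Qed.

Lemma zd_ze z : zd (ze z) = z.
Proof.
  unfold ze, zd. destruct (Z.leb_spec 0 z).
  - rewrite odd_double, Nat.div2_double. lia.
  - rewrite odd_sdouble, Nat.div2_succ_double. lia.
Qed.

Definition idx (b1 b2 : bool) (z : Z) : nat := (Nat.b2n b1 + 2 * (Nat.b2n b2 + 2 * ze z))%nat.
Definition dec (i : nat) : bool * bool * Z := (Nat.odd i, Nat.odd (Nat.div2 i), zd (Nat.div2 (Nat.div2 i))).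

Lemma dec_idx b1 b2 z : dec (idx b1 b2 z) = (b1, b2, z).
Proof.
  assert (H : forall (b : bool) n, Nat.odd (Nat.b2n b + 2 * n) = b /\ Nat.div2 (Nat.b2n b + 2 * n) = n).
  { intros b n. destruct b; simpl Nat.b2n.
    - replace (1 + 2 * n)%nat with (S (2 * n)) by lia. rewrite odd_sdouble, Nat.div2_succ_double. auto.
    - replace (0 + 2 * n)%nat with (2 * n)%nat by lia. rewrite odd_double, Nat.div2_double. auto. }
  unfold dec, idx. destruct (H b1 (Nat.b2n b2 + 2 * ze z)%nat) as [h1 h2]. rewrite h1, h2.
  destruct (H b2 (ze z)) as [h3 h4]. rewrite h3, h4, zd_ze. reflexivity.
Qed.

Lemma core a b c A Bb (hc : 0 < c) (Hlo : forall n, (1 <= n)%nat -> c <= a n)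
  (Hhi : forall n, (1 <= n)%nat -> a n <= A) (Hb : forall n, (1 <= n)%nat -> Rabs (b n) <= Bb)
  (n : nat -> nat) (hn : forall j, (j <= n j)%nat) (x : nat -> R) X (HX : forall j, Rabs (x j) <= X)
  eps (he : 0 < eps)
  (Hr : forall j, eps <= (opoly a b (n j) (x j))^2 / CD_kernel a b (n j) (x j) (x j)) :
  exists (phi : nat -> nat) xs, (forall j, (phi j < phi (S j))%nat) /\
    Un_cv (fun j => x (phi j)) xs /\ ~ Xi a b xs.
Proof.
  set (K := fun j => CD_kernel a b (n j) (x j) (x j)).
  assert (hK : forall j, 1 <= K j) by (intro; apply K_ge1).
  set (s := fun j => sqrt (K j)).
  assert (hs : forall j, 0 < s j) by (intro j; apply sqrt_lt_R0; specialize (hK j); lra).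
  assert (hs2 : forall j, s j ^ 2 = K j) by (intro j; unfold s; simpl; rewrite Rmult_1_r; apply sqrt_sqrt; specialize (hK j); lra).
  set (U := fun j (z : Z) => Wn a b (x j) (Z.to_nat (Z.of_nat (S (n j)) + z)) / s j).
  set (Af := fun j z => extZ a (Z.of_nat (S (n j)) + z)).
  set (Bf := fun j z => extZ b (Z.of_nat (S (n j)) + z)).
  assert (hA0 : 0 <= A) by (specialize (Hlo 1%nat (le_n _)); specialize (Hhi 1%nat (le_n _)); lra).
  assert (HA : forall n, (1 <= n)%nat -> Rabs (a n) <= A).
  { intros m hm. specialize (Hlo m hm); specialize (Hhi m hm). rewrite Rabs_pos_eq; lra. }
  assert (hB0 : 0 <= Bb) by (specialize (Hb 1%nat (le_n _)); pose proof (Rabs_pos (b 1%nat)); lra).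
  assert (F1 : forall j z, (1 <= Z.of_nat (S (n j)) + z)%Z ->
     Af j z * U j (z + 1)%Z + Bf j z * U j z + Af j (z - 1)%Z * U j (z - 1)%Z = x j * U j z).
  { intros j z hz. unfold Af, Bf, U.
    set (N := (Z.of_nat (S (n j)) + z)%Z) in *.
    replace (Z.of_nat (S (n j)) + (z + 1))%Z with (N + 1)%Z by (unfold N; lia).
    replace (Z.of_nat (S (n j)) + (z - 1))%Z with (N - 1)%Z by (unfold N; lia).
    assert (ha : a (Z.to_nat N) <> 0) by (specialize (Hlo (Z.to_nat N) ltac:(lia)); lra).
    pose proof (recZ a b (x j) N hz ha) as R.
    transitivity ((extZ a N * Wn a b (x j) (Z.to_nat (N + 1)) + extZ b N * Wn a b (x j) (Z.to_nat N)
      + extZ a (N - 1) * Wn a b (x j) (Z.to_nat (N - 1))) / s j).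
    unfold Rdiv; ring. rewrite R. unfold Rdiv; ring. }
  assert (Usq : forall j z, U j z ^ 2 = Wn a b (x j) (Z.to_nat (Z.of_nat (S (n j)) + z)) ^ 2 / K j).
  { intros j z. unfold U. rewrite <- hs2. field. specialize (hs j). lra. }
  assert (F2 : forall j N, sum_f_R0 (fun k => U j (- Z.of_nat k)%Z ^ 2) N <= 1).
  { intros j N. rewrite (sum_ext _ (fun k => / K j * Wn a b (x j) (S (n j) - k) ^ 2)).
    2:{ intro k. rewrite Usq. rewrite zto_sub. unfold Rdiv. ring. }
    rewrite sum_scal. 
    pose proof (rev_bound (fun i => Wn a b (x j) i ^ 2) ltac:(simpl; ring) (fun k => pow2_ge_0 _) (S (n j)) N) as h.
    rewrite Wn_sum in h. fold (K j) in h.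
    apply Rmult_le_reg_l with (K j). specialize (hK j); lra.
    rewrite <- Rmult_assoc, Rinv_r, Rmult_1_l, Rmult_1_r. exact h. specialize (hK j); lra. }
  assert (F3 : forall j, eps <= U j 0%Z ^ 2).
  { intro j. rewrite Usq. rewrite Z.add_0_r, Nat2Z.id. simpl Wn. apply Hr. }
  assert (Hneg : forall k j, Rabs (U j (- Z.of_nat k)%Z) <= 1).
  { intros k j. pose proof (F2 j k).
    pose proof (sum_term_le (fun k => U j (- Z.of_nat k)%Z ^ 2) k k (fun _ => pow2_ge_0 _) (le_n _)) as h.
    cbv beta in h. rewrite <- pow2_abs in h. pose proof (Rabs_pos (U j (- Z.of_nat k)%Z)). nra. }
  assert (Hpos : forall k, exists B, 0 <= B /\ forall j, Rabs (U j (Z.of_nat k)) <= B /\ Rabs (U j (Z.of_nat k - 1)%Z) <= B).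
  { induction k.
    - exists 1. split. lra. intro j. split.
      + apply (Hneg 0%nat j).
      + replace (Z.of_nat 0 - 1)%Z with (- Z.of_nat 1)%Z by lia. apply Hneg.
    - destruct IHk as [B [hB0' HB]].
      exists (Rmax B ((X * B + Bb * B + A * B) / c)). split. apply Rle_trans with B; [lra|apply Rmax_l].
      intro j. split.
      + replace (Z.of_nat (S k)) with (Z.of_nat k + 1)%Z by lia.
        eapply Rle_trans; [|apply Rmax_r].
        set (z := Z.of_nat k) in *.
        pose proof (F1 j z ltac:(unfold z; lia)) as E.
        assert (hAf : c <= Af j z).
        { unfold Af. rewrite extZ_pos by lia. apply Hlo. lia. }
        destruct (HB j) as [h1 h2].
        assert (hx : Rabs (x j * U j z) <= X * B).
        { rewrite Rabs_mult. apply Rmult_le_compat; try apply Rabs_pos; auto. }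
        assert (hb : Rabs (Bf j z * U j z) <= Bb * B).
        { rewrite Rabs_mult. apply Rmult_le_compat; try apply Rabs_pos; auto. apply extZ_bound; auto. }
        assert (ha : Rabs (Af j (z - 1)%Z * U j (z - 1)%Z) <= A * B).
        { rewrite Rabs_mult. apply Rmult_le_compat; try apply Rabs_pos; auto. apply extZ_bound; auto. }
        assert (E2 : Af j z * U j (z + 1)%Z = x j * U j z - Bf j z * U j z - Af j (z - 1)%Z * U j (z - 1)%Z) by lra.
        assert (hr : Rabs (Af j z * U j (z + 1)%Z) <= X * B + Bb * B + A * B).
        { rewrite E2. unfold Rminus. eapply Rle_trans. apply Rabs_triang. rewrite Rabs_Ropp.
          eapply Rle_trans. apply Rplus_le_compat_r. apply Rabs_triang. rewrite Rabs_Ropp. lra. }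
        rewrite Rabs_mult, (Rabs_pos_eq (Af j z)) in hr by lra.
        apply Rmult_le_reg_l with c. auto.
        replace (c * ((X * B + Bb * B + A * B) / c)) with (X * B + Bb * B + A * B) by (field; lra).
        pose proof (Rabs_pos (U j (z + 1)%Z)). nra.
      + replace (Z.of_nat (S k) - 1)%Z with (Z.of_nat k) by lia. eapply Rle_trans; [|apply Rmax_l]. apply HB.
  }
  assert (F4 : forall z, exists B, forall j, Rabs (U j z) <= B).
  { intro z. destruct (Z.le_gt_cases 0 z).
    - destruct (Hpos (Z.to_nat z)) as [B [_ HB]]. exists B. intro j. rewrite <- (Z2Nat.id z) by lia. apply HB.
    - exists 1. intro j. replace z with (- Z.of_nat (Z.to_nat (- z)))%Z by lia. apply Hneg. }
  set (fam := fun i j => let '(b1, b2, z) := dec i in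
                 if b1 then (if b2 then Af j z else Bf j z) else (if b2 then U j z else x j)).
  assert (Hfam : forall i, exists B, forall j, Rabs (fam i j) <= B).
  { intro i. unfold fam. destruct (dec i) as [[b1 b2] z]. destruct b1, b2.
    - exists A. intro; apply extZ_bound; auto.
    - exists Bb. intro; apply extZ_bound; auto.
    - apply F4.
    - exists X. auto. }
  destruct (diag fam Hfam) as [d [Hd Hlim]].
  set (L := fun i => proj1_sig (constructive_indefinite_description _ (Hlim i))).
  assert (HL : forall i, Un_cv (fun j => fam i (d j)) (L i)).
  { intro i. exact (proj2_sig (constructive_indefinite_description _ (Hlim i))). }
  assert (HLa : forall z, Un_cv (fun j => Af (d j) z) (L (idx true true z))).
  { intro z. pose proof (HL (idx true true z)) as h. unfold fam in h. rewrite dec_idx in h. exact h. }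
  assert (HLb : forall z, Un_cv (fun j => Bf (d j) z) (L (idx true false z))).
  { intro z. pose proof (HL (idx true false z)) as h. unfold fam in h. rewrite dec_idx in h. exact h. }
  assert (HLu : forall z, Un_cv (fun j => U (d j) z) (L (idx false true z))).
  { intro z. pose proof (HL (idx false true z)) as h. unfold fam in h. rewrite dec_idx in h. exact h. }
  assert (HLx : Un_cv (fun j => x (d j)) (L (idx false false 0%Z))).
  { pose proof (HL (idx false false 0%Z)) as h. unfold fam in h. rewrite dec_idx in h. exact h. }
  set (ar := fun z => L (idx true true z)). set (br := fun z => L (idx true false z)).
  set (u := fun z => L (idx false true z)). set (xs := L (idx false false 0%Z)).
  exists d, xs. split; [exact Hd|split; [exact HLx|]].
  intro HXi.
  assert (Hdge : forall j, (j <= d j)%nat) by (apply inc_ge; exact Hd).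
  assert (HRL : right_limit a b ar br).
  { exists (fun j => S (n (d j))). split; [|split].
    - intro M. exists M. intros j hj. specialize (Hdge j). specialize (hn (d j)). lia.
    - intro z. exact (HLa z).
    - intro z. exact (HLb z). }
  assert (Heq : forall z, ar z * u (z + 1)%Z + br z * u z + ar (z - 1)%Z * u (z - 1)%Z = xs * u z).
  { intro z.
    assert (Hc := CV_minus _ _ _ _
      (CV_plus _ _ _ _ (CV_plus _ _ _ _ (CV_mult _ _ _ _ (HLa z) (HLu (z+1)%Z)) (CV_mult _ _ _ _ (HLb z) (HLu z)))
                        (CV_mult _ _ _ _ (HLa (z-1)%Z) (HLu (z-1)%Z)))
      (CV_mult _ _ _ _ HLx (HLu z))).
    apply (cv_ev_zero _ _ (Z.to_nat (- z))) in Hc.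
    - unfold ar, br, u, xs. lra.
    - intros j hj. cbv beta. rewrite F1. ring. specialize (Hdge j). specialize (hn (d j)). lia. }
  assert (Hnz : exists z, u z <> 0).
  { exists 0%Z. intro h0. 
    assert (eps <= u 0%Z ^ 2).
    { apply (cv_ge (fun j => U (d j) 0%Z ^ 2)). simpl. apply CV_mult. apply HLu. apply CV_mult. apply HLu. apply cv_const.
      intro j. apply F3. }
    rewrite h0 in H. simpl in H. lra. }
  destruct (HXi ar br HRL u Heq Hnz 1) as [N HN].
  assert (sum_f_R0 (fun k => u (- Z.of_nat k)%Z ^ 2) N <= 1).
  { apply (cv_le (fun j => sum_f_R0 (fun k => U (d j) (- Z.of_nat k)%Z ^ 2) N)).
    - apply (cv_sum_fin (fun j k => U (d j) (- Z.of_nat k)%Z ^ 2) (fun k => u (- Z.of_nat k)%Z ^ 2)).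
      intro k. simpl. apply CV_mult. apply HLu. apply CV_mult. apply HLu. apply cv_const.
    - intro j. apply F2. }
  lra.
Qed.

Lemma neg_unif a b (Sp : R -> Prop) : ~ uniform_nevai a b Sp ->
  exists eps, 0 < eps /\ exists (n : nat -> nat) (x : nat -> R), (forall j, (j <= n j)%nat) /\
    (forall j, Sp (x j)) /\ forall j, eps <= (opoly a b (n j) (x j))^2 / CD_kernel a b (n j) (x j) (x j).
Proof.
  intros H. unfold uniform_nevai in H. apply not_all_ex_not in H. destruct H as [eps H].
  apply imply_to_and in H. destruct H as [he H]. exists eps. split; auto.
  assert (Hj : forall j : nat, exists p : nat * R, (j <= fst p)%nat /\ Sp (snd p) /\
     eps <= (opoly a b (fst p) (snd p))^2 / CD_kernel a b (fst p) (snd p) (snd p)).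
  { intro j. apply NNPP. intro Hc. apply H. exists j. intros n hn x hx.
    apply Rnot_lt_le. intro hlt. apply Hc. exists (n, x). simpl. repeat split; auto. lra. }
  set (P := fun j => proj1_sig (constructive_indefinite_description _ (Hj j))).
  exists (fun j => fst (P j)), (fun j => snd (P j)).
  repeat split; intro j; apply (proj2_sig (constructive_indefinite_description _ (Hj j))).
Qed.

Theorem theorem8p1 (a b : nat -> R)
  (ha_inf : exists c, 0 < c /\ forall n, (1 <= n)%nat -> c <= a n)
  (ha_sup : exists C, forall n, (1 <= n)%nat -> a n <= C)
  (hb : exists C, forall n, (1 <= n)%nat -> Rabs (b n) <= C) :
  (forall Kt : R -> Prop, compact Kt -> (forall x, Kt x -> Xi a b x) ->
     uniform_nevai a b Kt) /\
  ((forall x, ess_spectrum a b x -> Xi a b x) -> uniform_nevai a b (spectrum a b)).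
Proof.
  destruct ha_inf as [c [hc Hlo]]. destruct ha_sup as [A Hhi]. destruct hb as [Bb Hb].
  assert (hA0 : 0 <= A) by (specialize (Hlo 1%nat (le_n _)); specialize (Hhi 1%nat (le_n _)); lra).
  split.
  - intros Kt HKt HXi. destruct (classic (uniform_nevai a b Kt)) as [h|h]; auto. exfalso.
    destruct (neg_unif a b Kt h) as [eps [he [n [x [hn [hK hr]]]]]].
    destruct (compact_P1 Kt HKt) as [m [M HmM]].
    destruct (core a b c A Bb hc Hlo Hhi Hb n hn x (Rabs m + Rabs M)) with (eps := eps) as [phi [xs [hphi [hcv hnx]]]]; auto.
    { intro j. destruct (HmM (x j) (hK j)). apply Rabs_le. pose proof (Rle_abs m). pose proof (Rle_abs (-m)).
      pose proof (Rle_abs M). pose proof (Rle_abs (-M)). rewrite Rabs_Ropp in *. lra. }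
    apply hnx. apply HXi. destruct (classic (Kt xs)) as [k|k]; auto. exfalso.
    pose proof (compact_P2 Kt HKt) as Hcl. unfold closed_set, open_set in Hcl.
    destruct (Hcl xs k) as [del Hdel].
    destruct (hcv del (cond_pos del)) as [N HN].
    apply (Hdel (x (phi N))). unfold disc. apply HN. lia. apply hK.
  - intros Hess. destruct (classic (uniform_nevai a b (spectrum a b))) as [h|h]; auto. exfalso.
    destruct (neg_unif a b _ h) as [eps [he [n [x [hn [hK hr]]]]]].
    set (M := Rmax A Bb).
    assert (hM : 0 <= M) by (eapply Rle_trans; [apply hA0|apply Rmax_l]).
    assert (HaM : forall k, (1 <= k)%nat -> Rabs (a k) <= M).
    { intros k hk. specialize (Hlo k hk); specialize (Hhi k hk). rewrite Rabs_pos_eq by lra.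
      eapply Rle_trans; [apply Hhi|apply Rmax_l]. }
    assert (HbM : forall k, (1 <= k)%nat -> Rabs (b k) <= M).
    { intros k hk. eapply Rle_trans; [apply Hb; auto|apply Rmax_r]. }
    assert (hX : forall j, Rabs (x j) <= 6 * M + 1).
    { intro j. apply Rnot_lt_le. intro hlt. apply (hK j). apply (spec_bound a b M hM HaM HbM). auto. }
    destruct (core a b c A Bb hc Hlo Hhi Hb n hn x (6*M+1) hX eps he hr) as [phi [xs [hphi [hcv hnx]]]].
    assert (Hge : forall j, (j <= phi j)%nat) by (apply inc_ge; auto).
    assert (Hsp : spectrum a b xs).
    { intro Hres. destruct (res_open a b xs Hres) as [del [hdel Hdel]].
      destruct (hcv del hdel) as [N HN]. apply (hK (phi N)). apply Hdel. apply HN. lia. }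
    destruct (classic (disc_spectrum a b xs)) as [Hd|Hd].
    + destruct Hd as [_ [Heig [del [hdel Hiso]]]].
      destruct (hcv del hdel) as [J HJ].
      assert (Hev : forall j, (J <= j)%nat -> x (phi j) = xs).
      { intros j hj. apply Hiso. apply hK. apply HJ. lia. }
      assert (Ha0 : forall k, a (S k) <> 0) by (intro k; specialize (Hlo (S k) ltac:(lia)); lra).
      destruct (eigen_decay a b xs Ha0 Heig eps he) as [N0 HN0].
      set (j := max J N0).
      specialize (hr (phi j)). rewrite (Hev j (Nat.le_max_l _ _)) in hr.
      assert (hnj : (N0 <= n (phi j))%nat) by (specialize (Hge j); specialize (hn (phi j)); unfold j in *; lia).
      specialize (HN0 _ hnj). unfold Rdist in HN0. rewrite Rminus_0_r in HN0.
      set (p := opoly a b (n (phi j)) xs) in *.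
      pose proof (K_ge1 a b (n (phi j)) xs).
      set (Kv := CD_kernel a b (n (phi j)) xs xs) in *.
      assert (0 <= p^2) by apply pow2_ge_0.
      rewrite Rabs_pos_eq in HN0 by auto.
      assert (p^2 / Kv <= p^2).
      { unfold Rdiv. rewrite <- (Rmult_1_r (p^2)) at 2. apply Rmult_le_compat_l; auto.
        rewrite <- Rinv_1. apply Rinv_le_contravar; lra. }
      lra.
    + apply hnx. apply Hess. split; auto.
Qed.
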